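(* Suppose the representation has a single equivalence class $h$ of irreducible components, with multiplicity $m_h\ge1$, so $\mathcal H=\mathcal H_h\otimes\mathbb C^{m_h}$ and $\mathcal C=\{\Xi\ge0:\operatorname{Tr}_{\mathcal H_h}(\Xi)=d_{\mathcal H_h}I_{m_h}\}$. Let $\Xi\in\mathcal C$ and write $\Xi=\sum_{i=1}^r|w_i\rangle\langle w_i|$ with $r=\operatorname{rank}\Xi$ and $\{|w_i\rangle\}$ mutually orthogonal nonzero vectors (spectral decomposition with eigenvalues absorbed). Fix an orthonormal basis $\{|l\rangle\}$ of $\mathcal H_h$ and define $W_i\in\mathcal B(\mathcal H_h,\mathbb C^{m_h})$ by $|w_i\rangle=\sum_l|l\rangle\otimes W_i|l\rangle$. Then $\Xi$ is extremal in $\mathcal C$ if and only if the operators $\{W_iW_j^\dagger\}_{i,j=1}^r\subseteq\mathcal B(\mathbb C^{m_h})$ are linearly independent. In particular, every extremal $\Xi$ has $\operatorname{rank}(\Xi)\le m_h$.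
   Context: Let $G$ be a group with a unitary representation $g\mapsto U_g$ on a finite-dimensional Hilbert space $\mathcal H$ which is a multiple of a single irreducible representation: $\mathcal H=\mathcal H_h\otimes\mathbb C^{m_h}$, $U_g=U^{(h)}_g\otimes I_{m_h}$ with $U^{(h)}$ irreducible on $\mathcal H_h$; $d_{\mathcal H_h}=\dim\mathcal H_h$ and $\operatorname{Tr}_{\mathcal H_h}$ is the partial trace over $\mathcal H_h$. $\mathcal C$ is the convex set of seeds $\Xi$ of covariant POVMs $dP_g=U_g^\dagger\Xi U_g\,dg$. *)

(* Defs.v *)
From HB Require Import structures.
From mathcomp Require Import all_boot all_order all_algebra.
Set Implicit Arguments. Unset Strict Implicit. Unset Printing Implicit Defensive.
Import Order.TTheory GRing.Theory Num.Theory.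
Local Open Scope ring_scope.

(* Complex scalars: any numeric closed field C (e.g. complex R for R real closed). *)
(* Hilbert space H = H_h (x) C^m with dim H_h = d; the basis vector |l> (x) |a>
   is indexed by mxvec_index l a : 'I_(d * m). *)

Definition adjmx (C : numClosedFieldType) (p q : nat) (A : 'M[C]_(p, q)) : 'M[C]_(q, p) :=
  (map_mx Num.conj A)^T.

Definition psd (C : numClosedFieldType) (n : nat) (A : 'M[C]_n) : Prop :=
  adjmx A = A /\ forall v : 'cV[C]_n, 0 <= (adjmx v *m A *m v) 0 0.

Definition ptrace_h (C : numClosedFieldType) (d m : nat) (X : 'M[C]_(d * m)) : 'M[C]_m :=
  \matrix_(a < m, b < m) \sum_(l < d) X (mxvec_index l a) (mxvec_index l b).

Definition seeds (C : numClosedFieldType) (d m : nat) (X : 'M[C]_(d * m)) : Prop :=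
  psd X /\ ptrace_h X = (d%:R : C)%:M.

Definition extremal (C : numClosedFieldType) (d m : nat) (X : 'M[C]_(d * m)) : Prop :=
  seeds X /\
  forall (X1 X2 : 'M[C]_(d * m)) (t : C), seeds X1 -> seeds X2 -> 0 < t < 1 ->
    X = t *: X1 + (1 - t) *: X2 -> X1 = X /\ X2 = X.

(* W_i : H_h -> C^m defined by |w> = sum_l |l> (x) W |l> *)
Definition Wop (C : numClosedFieldType) (d m : nat) (w : 'cV[C]_(d * m)) : 'M[C]_(m, d) :=
  \matrix_(a < m, l < d) w (mxvec_index l a) 0.

Definition lin_indep (C : numClosedFieldType) (I : finType) (p q : nat)
  (F : I -> 'M[C]_(p, q)) : Prop :=
  forall c : I -> C, \sum_(k : I) c k *: F k = 0 -> forall k, c k = 0.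

(* Main.v *)
Require Import Defs.
From HB Require Import structures.
From mathcomp Require Import all_boot all_order all_algebra.
From mathcomp Require Import ring.
From mathcomp Require Import zify.
Import Order.TTheory GRing.Theory Num.Theory.
Local Open Scope ring_scope.
Set Implicit Arguments. Unset Strict Implicit. Unset Printing Implicit Defensive.

Lemma adjmxE {C : numClosedFieldType} p q (A : 'M[C]_(p, q)) i j :
  adjmx A i j = (A j i)^*.
Proof. by rewrite /adjmx !mxE. Qed.

Lemma adjmxK {C : numClosedFieldType} p q (A : 'M[C]_(p, q)) : adjmx (adjmx A) = A.
Proof. by apply/matrixP => i j; rewrite !adjmxE conjCK. Qed.

Lemma adjmxM {C : numClosedFieldType} p q r (A : 'M[C]_(p, q)) (B : 'M[C]_(q, r)) :
  adjmx (A *m B) = adjmx B *m adjmx A.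
Proof.
apply/matrixP => i j; rewrite !mxE rmorph_sum; apply: eq_bigr => k _.
by rewrite !mxE rmorphM mulrC.
Qed.

Lemma adjmxD {C : numClosedFieldType} p q (A B : 'M[C]_(p, q)) :
  adjmx (A + B) = adjmx A + adjmx B.
Proof. by apply/matrixP => i j; rewrite !mxE rmorphD. Qed.

Lemma adjmxN {C : numClosedFieldType} p q (A : 'M[C]_(p, q)) :
  adjmx (- A) = - adjmx A.
Proof. by apply/matrixP => i j; rewrite !mxE rmorphN. Qed.

Lemma adjmxB {C : numClosedFieldType} p q (A B : 'M[C]_(p, q)) :
  adjmx (A - B) = adjmx A - adjmx B.
Proof. by rewrite adjmxD adjmxN. Qed.

Lemma adjmxZ {C : numClosedFieldType} p q (a : C) (A : 'M[C]_(p, q)) :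
  adjmx (a *: A) = a^* *: adjmx A.
Proof. by apply/matrixP => i j; rewrite !mxE rmorphM. Qed.

Lemma adjmx0 {C : numClosedFieldType} p q : adjmx (0 : 'M[C]_(p, q)) = 0.
Proof. by apply/matrixP => i j; rewrite !mxE rmorph0. Qed.

Lemma adjmx1 {C : numClosedFieldType} p : adjmx (1%:M : 'M[C]_p) = 1%:M.
Proof. by apply/matrixP => i j; rewrite !mxE rmorphMn rmorph1 eq_sym. Qed.

Lemma adjmx_sum {C : numClosedFieldType} p q (I : finType) (F : I -> 'M[C]_(p, q)) :
  adjmx (\sum_i F i) = \sum_i adjmx (F i).
Proof.
by apply/matrixP => i j; rewrite !adjmxE !summxE rmorph_sum; apply: eq_bigr => k _; rewrite adjmxE.
Qed.

Lemma mul11 {C : numClosedFieldType} (A B : 'M[C]_1) : (A *m B) 0 0 = A 0 0 * B 0 0.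
Proof. by rewrite !mxE big_ord1. Qed.

Lemma adj11 {C : numClosedFieldType} (A : 'M[C]_1) : adjmx A 0 0 = (A 0 0)^*.
Proof. by rewrite adjmxE. Qed.

Lemma ptraceD {C : numClosedFieldType} d m (A B : 'M[C]_(d * m)) :
  ptrace_h (A + B) = ptrace_h A + ptrace_h B.
Proof. by apply/matrixP => a b; rewrite !mxE -big_split; apply: eq_bigr => l _; rewrite !mxE. Qed.

Lemma ptraceZ {C : numClosedFieldType} d m (c : C) (A : 'M[C]_(d * m)) :
  ptrace_h (c *: A) = c *: ptrace_h A.
Proof. by apply/matrixP => a b; rewrite !mxE mulr_sumr; apply: eq_bigr => l _; rewrite !mxE. Qed.

Lemma ptraceN {C : numClosedFieldType} d m (A : 'M[C]_(d * m)) :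
  ptrace_h (- A) = - ptrace_h A.
Proof. by rewrite -scaleN1r ptraceZ scaleN1r. Qed.

Lemma ptraceB {C : numClosedFieldType} d m (A B : 'M[C]_(d * m)) :
  ptrace_h (A - B) = ptrace_h A - ptrace_h B.
Proof. by rewrite ptraceD ptraceN. Qed.

Lemma ptrace_sum {C : numClosedFieldType} d m (I : finType) (F : I -> 'M[C]_(d * m)) :
  ptrace_h (\sum_i F i) = \sum_i ptrace_h (F i).
Proof.
apply/matrixP => a b; rewrite !mxE summxE.
under eq_bigr do rewrite summxE.
rewrite exchange_big /=; apply: eq_bigr => k _; rewrite mxE.
by apply: eq_bigr => l _.
Qed.

Lemma ptrace_outer {C : numClosedFieldType} d m (w v : 'cV[C]_(d * m)) :
  ptrace_h (w *m adjmx v) = Wop w *m adjmx (Wop v).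
Proof.
apply/matrixP => a b; rewrite !mxE; apply: eq_bigr => l _.
by rewrite !mxE big_ord1 !mxE.
Qed.

Definition ip {C : numClosedFieldType} n (u v : 'cV[C]_n) : C := (adjmx u *m v) 0 0.
Definition qf {C : numClosedFieldType} n (A : 'M[C]_n) (v : 'cV[C]_n) : C :=
  (adjmx v *m A *m v) 0 0.

Lemma ip_conj {C : numClosedFieldType} n (u v : 'cV[C]_n) : (ip u v)^* = ip v u.
Proof. by rewrite /ip -adj11 adjmxM adjmxK. Qed.

Lemma ipE {C : numClosedFieldType} n (u v : 'cV[C]_n) :
  ip u v = \sum_k (u k 0)^* * v k 0.
Proof. by rewrite /ip mxE; apply: eq_bigr => k _; rewrite adjmxE. Qed.

Lemma ip_ge0 {C : numClosedFieldType} n (u : 'cV[C]_n) : 0 <= ip u u.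
Proof. by rewrite ipE; apply: sumr_ge0 => k _; rewrite -normCKC exprn_ge0. Qed.

Lemma ip_eq0 {C : numClosedFieldType} n (u : 'cV[C]_n) : ip u u = 0 -> u = 0.
Proof.
rewrite ipE => /psumr_eq0P H; apply/matrixP => k j; rewrite ord1 mxE.
have /eqP := H (fun i _ => ltac:(by rewrite -normCKC exprn_ge0)) k isT.
by rewrite -normCKC sqrf_eq0 normr_eq0 => /eqP.
Qed.

Lemma ip_neq0 {C : numClosedFieldType} n (u : 'cV[C]_n) : u != 0 -> ip u u != 0.
Proof. by apply: contra => /eqP /ip_eq0 ->. Qed.

Lemma adj_herm_mul {C : numClosedFieldType} n (A : 'M[C]_n) (v : 'cV[C]_n) :
  adjmx A = A -> adjmx v *m A = adjmx (A *m v).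
Proof. by move=> hA; rewrite adjmxM hA. Qed.

Lemma psd_ker {C : numClosedFieldType} n (A : 'M[C]_n) (v : 'cV[C]_n) :
  psd A -> qf A v = 0 -> A *m v = 0.
Proof.
move=> [hA hq] q0.
set u := A *m v.
have hvA : adjmx v *m A = adjmx u by rewrite adj_herm_mul.
set a := ip u u; set b := qf A u.
have a0 : 0 <= a := ip_ge0 u.
have b0 : 0 <= b := hq u.
have uv0 : ip u v = 0 by rewrite /ip -hvA.
pose y := (b + 1) *: v - a *: u.
have hy := hq y.
have ey : adjmx y = (b + 1) *: adjmx v - a *: adjmx u.
  by rewrite /y adjmxB !adjmxZ !geC0_conj // addr_ge0.
have : qf A y = - (a ^+ 2 * (b + 2)).
  have e1 : adjmx u *m v = (ip u v)%:M := mx11_scalar _.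
  have e2 : adjmx u *m u = a%:M := mx11_scalar _.
  have e3 : adjmx u *m A *m u = b%:M := mx11_scalar _.
  have e4 : adjmx u *m A *m v = adjmx u *m u by rewrite -mulmxA.
  rewrite /qf ey mulmxBl -!scalemxAl hvA /y.
  rewrite mulmxBl !mulmxBr -!scalemxAl -!scalemxAr e4 e1 e2 e3 uv0.
  rewrite !mxE eqxx /= !mulr1n; ring.
rewrite /qf in hy *; move=> e; rewrite e oppr_ge0 in hy.
have h2 : 0 < b + 2 by rewrite ltr_wpDl // ltr0n.
have : a ^+ 2 * (b + 2) = 0.
  apply/eqP; rewrite eq_le hy /=; apply: mulr_ge0; first exact: exprn_ge0.
  exact: ltW.
move=> /eqP; rewrite mulf_eq0 (gt_eqF h2) orbF sqrf_eq0 => /eqP /ip_eq0.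
by [].
Qed.

Lemma qf_split {C : numClosedFieldType} n (X X1 X2 : 'M[C]_n) (t : C) (v : 'cV[C]_n) :
  X = t *: X1 + (1 - t) *: X2 -> qf X v = t * qf X1 v + (1 - t) * qf X2 v.
Proof.
move=> ->; rewrite /qf mulmxDr mulmxDl -!scalemxAr -!scalemxAl.
by rewrite !mxE.
Qed.

Lemma psd_comb_ker {C : numClosedFieldType} n (X X1 X2 : 'M[C]_n) (t : C) (v : 'cV[C]_n) :
  psd X1 -> psd X2 -> 0 < t < 1 -> X = t *: X1 + (1 - t) *: X2 ->
  X *m v = 0 -> X1 *m v = 0.
Proof.
move=> h1 h2 /andP[t0 t1] eX Xv; apply: psd_ker => //.
have : qf X v = 0 by rewrite /qf -mulmxA Xv mulmx0 mxE.
rewrite (qf_split v eX) => /eqP; rewrite paddr_eq0.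
- by case/andP => /eqP/eqP; rewrite mulf_eq0 (gt_eqF t0) => /eqP.
- by apply: mulr_ge0; [exact: ltW | exact: h1.2].
- by apply: mulr_ge0; [by rewrite subr_ge0 ltW | exact: h2.2].
Qed.

Lemma mx_eq0_cV {C : numClosedFieldType} p q (A : 'M[C]_(p, q)) :
  (forall v : 'cV[C]_q, A *m v = 0) -> A = 0.
Proof.
move=> H; apply/matrixP => i j.
have := H (delta_mx j 0); rewrite -colE => /matrixP /(_ i 0).
by rewrite !mxE.
Qed.

Definition Fam {C : numClosedFieldType} d m (I : finType) (w : I -> 'cV[C]_(d * m))
  (ij : I * I) : 'M[C]_m := Wop (w ij.1) *m adjmx (Wop (w ij.2)).

Definition dsum {C : numClosedFieldType} n (I : finType) (w : I -> 'cV[C]_n)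
  (c : I -> I -> C) : 'M[C]_n := \sum_i \sum_j c i j *: (w i *m adjmx (w j)).

Lemma ptrace_dsum {C : numClosedFieldType} d m (I : finType) (w : I -> 'cV[C]_(d * m))
  (c : I -> I -> C) :
  ptrace_h (dsum w c) = \sum_(p : I * I) c p.1 p.2 *: Fam w p.
Proof.
rewrite /dsum ptrace_sum -(pair_big predT predT (fun i j => c i j *: Fam w (i, j))).
apply: eq_bigr => i _; rewrite ptrace_sum; apply: eq_bigr => j _.
by rewrite ptraceZ ptrace_outer.
Qed.

Lemma outer_sandwich {C : numClosedFieldType} n (u v : 'cV[C]_n) (M : 'M[C]_n) :
  (u *m adjmx u) *m M *m (v *m adjmx v) = (adjmx u *m M *m v) 0 0 *: (u *m adjmx v).
Proof.
have -> : u *m adjmx u *m M *m (v *m adjmx v) = u *m (adjmx u *m M *m v) *m adjmx v.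
  by rewrite !mulmxA.
by rewrite {1}[adjmx u *m M *m v]mx11_scalar mul_mx_scalar -scalemxAl.
Qed.

Definition nn {C : numClosedFieldType} n (u : 'cV[C]_n) := ip u u.

Definition proj {C : numClosedFieldType} n (I : finType) (w : I -> 'cV[C]_n) : 'M[C]_n :=
  \sum_i (nn (w i))^-1 *: (w i *m adjmx (w i)).

Lemma nn_conj {C : numClosedFieldType} n (u : 'cV[C]_n) : (nn u)^* = nn u.
Proof. exact: ip_conj. Qed.

Lemma adj_proj {C : numClosedFieldType} n (I : finType) (w : I -> 'cV[C]_n) :
  adjmx (proj w) = proj w.
Proof.
rewrite /proj adjmx_sum; apply: eq_bigr => i _.
rewrite adjmxZ adjmxM adjmxK fmorphV; congr (_^-1 *: _); exact: ip_conj.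
Qed.

Lemma adj_w_proj {C : numClosedFieldType} n (I : finType) (w : I -> 'cV[C]_n) :
  (forall i j, i != j -> adjmx (w i) *m w j = 0) -> (forall i, w i != 0) ->
  forall j, adjmx (w j) *m proj w = adjmx (w j).
Proof.
move=> orth nz j; rewrite /proj mulmx_sumr (bigD1 j) //= big1 ?addr0.
  rewrite -scalemxAr mulmxA [adjmx (w j) *m w j]mx11_scalar mul_scalar_mx.
  by rewrite scalerA mulVf ?scale1r // ip_neq0.
by move=> i ij; rewrite -scalemxAr mulmxA orth 1?eq_sym // mul0mx scaler0.
Qed.

Lemma X_proj {C : numClosedFieldType} n (I : finType) (w : I -> 'cV[C]_n) :
  (forall i j, i != j -> adjmx (w i) *m w j = 0) -> (forall i, w i != 0) ->
  (\sum_i w i *m adjmx (w i)) *m proj w = \sum_i w i *m adjmx (w i).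
Proof.
move=> orth nz; rewrite mulmx_suml; apply: eq_bigr => i _.
by rewrite -mulmxA adj_w_proj.
Qed.

Lemma dsum_diag {C : numClosedFieldType} n (I : finType) (w : I -> 'cV[C]_n) :
  dsum w (fun i j => (i == j)%:R) = \sum_i w i *m adjmx (w i).
Proof.
rewrite /dsum; apply: eq_bigr => i _; rewrite (bigD1 i) //= big1 ?addr0.
  by rewrite eqxx scale1r.
by move=> j ji; rewrite eq_sym (negbTE ji) scale0r.
Qed.

Lemma dsumB {C : numClosedFieldType} n (I : finType) (w : I -> 'cV[C]_n) c c' :
  dsum w c - dsum w c' = dsum w (fun i j => c i j - c' i j).
Proof.
rewrite /dsum -sumrB; apply: eq_bigr => i _; rewrite -sumrB.
by apply: eq_bigr => j _; rewrite scalerBl.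
Qed.

Lemma indep_extremal {C : numClosedFieldType} d m (I : finType)
  (X : 'M[C]_(d * m)) (w : I -> 'cV[C]_(d * m)) :
  seeds X -> X = \sum_i w i *m adjmx (w i) ->
  (forall i j, i != j -> adjmx (w i) *m w j = 0) -> (forall i, w i != 0) ->
  lin_indep (Fam w) -> extremal X.
Proof.
move=> sX eX orth nz ind; split => // X1 X2 t s1 s2 /andP[t0 t1] eC.
have X1X : X1 = X.
  have XP : X *m (1%:M - proj w) = 0.
    by rewrite mulmxBr mulmx1 eX X_proj // subrr.
  have h1 : X1 *m (1%:M - proj w) = 0.
    apply: mx_eq0_cV => v; rewrite -mulmxA.
    apply: (psd_comb_ker s1.1 s2.1 _ eC); first by rewrite t0 t1.
    by rewrite mulmxA XP mul0mx.
  have hX1 : X1 = X1 *m proj w.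
    by apply/eqP; rewrite -subr_eq0 -{1}(mulmx1 X1) -mulmxBr h1.
  have hX1' : X1 = proj w *m X1.
    by rewrite -{1}s1.1.1 {1}hX1 adjmxM adj_proj s1.1.1.
  pose c i j := (nn (w i))^-1 * (nn (w j))^-1 * (adjmx (w i) *m X1 *m w j) 0 0.
  have eX1 : X1 = dsum w c.
    rewrite {1}hX1 {1}hX1' /proj !mulmx_suml /dsum; apply: eq_bigr => i _.
    rewrite mulmx_sumr; apply: eq_bigr => j _.
    rewrite -!scalemxAl -scalemxAr outer_sandwich !scalerA /c; congr (_ *: _).
  have hD : X1 - X = dsum w (fun i j => c i j - (i == j)%:R).
    by rewrite eX1 eX -dsum_diag dsumB.
  have : ptrace_h (X1 - X) = 0 by rewrite ptraceB s1.2 sX.2 subrr.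
  rewrite hD ptrace_dsum => /ind H.
  apply/eqP; rewrite -subr_eq0 hD /dsum; apply/eqP.
  apply: big1 => i _; apply: big1 => j _.
  by rewrite (H (i, j)) scale0r.
split => //.
have t10 : 1 - t != 0 by rewrite subr_eq0 eq_sym (lt_eqF t1).
apply: (scalerI t10).
have e := eC; rewrite X1X in e.
rewrite [RHS]scalerBl scale1r {1}e addrAC subrr add0r.
by [].
Qed.

Lemma qfD {C : numClosedFieldType} n (A B : 'M[C]_n) v : qf (A + B) v = qf A v + qf B v.
Proof. by rewrite /qf mulmxDr mulmxDl mxE. Qed.

Lemma qfZ {C : numClosedFieldType} n (s : C) (A : 'M[C]_n) v : qf (s *: A) v = s * qf A v.
Proof. by rewrite /qf -scalemxAr -scalemxAl mxE. Qed.

Lemma qf_sum {C : numClosedFieldType} n (I : finType) (F : I -> 'M[C]_n) v :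
  qf (\sum_i F i) v = \sum_i qf (F i) v.
Proof. by rewrite /qf mulmx_sumr mulmx_suml summxE. Qed.

Lemma qf_outer {C : numClosedFieldType} n (u u' v : 'cV[C]_n) :
  qf (u *m adjmx u') v = (ip u v)^* * ip u' v.
Proof.
rewrite /qf ip_conj /ip -mul11; congr (_ 0 0); by rewrite !mulmxA.
Qed.

Lemma qf_conj {C : numClosedFieldType} n (A : 'M[C]_n) v :
  adjmx A = A -> (qf A v)^* = qf A v.
Proof. by move=> hA; rewrite /qf -adj11 !adjmxM adjmxK hA mulmxA. Qed.

Lemma adj_dsum {C : numClosedFieldType} n (I : finType) (w : I -> 'cV[C]_n) c :
  adjmx (dsum w c) = dsum w (fun i j => (c j i)^*).
Proof.
rewrite /dsum adjmx_sum exchange_big; apply: eq_bigr => i _.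
rewrite adjmx_sum; apply: eq_bigr => j _.
by rewrite adjmxZ adjmxM adjmxK.
Qed.

Lemma eq_dsum {C : numClosedFieldType} n (I : finType) (w : I -> 'cV[C]_n) c c' :
  (forall i j, c i j = c' i j) -> dsum w c = dsum w c'.
Proof. by move=> h; apply: eq_bigr => i _; apply: eq_bigr => j _; rewrite h. Qed.

Lemma norm_prod_le {C : numClosedFieldType} (I : finType) (f : I -> C) i j :
  `|f i| * `|f j| <= \sum_k `|f k| ^+ 2.
Proof.
have hk k : `|f k| ^+ 2 <= \sum_k `|f k| ^+ 2.
  rewrite (bigD1 k) //= lerDl; apply: sumr_ge0 => *; exact: exprn_ge0.
case/orP: (ger_leVge (normr_ge0 (f i)) (normr_ge0 (f j))) => h.
  apply: le_trans (hk j); rewrite expr2; exact: ler_wpM2r.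
apply: le_trans (hk i); rewrite expr2 mulrC; exact: ler_wpM2r.
Qed.

Lemma psd_perturb {C : numClosedFieldType} n (I : finType) (w : I -> 'cV[C]_n)
   (c : I -> I -> C) (s : C) :
  (forall i j, (c i j)^* = c j i) -> s^* = s ->
  `|s| * (\sum_i \sum_j `|c i j|) <= 1 ->
  psd (\sum_i w i *m adjmx (w i) + s *: dsum w c).
Proof.
move=> hc hs hK; split.
  rewrite adjmxD adjmxZ hs adj_dsum adjmx_sum.
  congr (_ + s *: _); last by apply: eq_dsum => i j; rewrite hc.
  by apply: eq_bigr => i _; rewrite adjmxM adjmxK.
move=> v.
pose z i := ip (w i) v.
have hreal : (qf (\sum_i w i *m adjmx (w i) + s *: dsum w c) v)^* =
             qf (\sum_i w i *m adjmx (w i) + s *: dsum w c) v.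
  apply: qf_conj; rewrite adjmxD adjmxZ hs adj_dsum adjmx_sum.
  congr (_ + s *: _); last by apply: eq_dsum => i j; rewrite hc.
  by apply: eq_bigr => i _; rewrite adjmxM adjmxK.
rewrite -/(qf _ v).
move: hreal; rewrite qfD qfZ qf_sum /dsum qf_sum.
set S := \sum_i qf _ _.
have eS : S = \sum_i `|z i| ^+ 2.
  by apply: eq_bigr => i _; rewrite qf_outer normCKC.
set Q := \sum_i qf _ _.
have eQ : Q = \sum_i \sum_j c i j * ((z i)^* * z j).
  apply: eq_bigr => i _; rewrite qf_sum; apply: eq_bigr => j _.
  by rewrite qfZ qf_outer.
have S0 : 0 <= S by rewrite eS; apply: sumr_ge0 => *; exact: exprn_ge0.
have hQ : `|Q| <= (\sum_i \sum_j `|c i j|) * S.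
  rewrite eQ mulr_suml; apply: le_trans (ler_norm_sum _ _ _) _.
  apply: ler_sum => i _; rewrite mulr_suml.
  apply: le_trans (ler_norm_sum _ _ _) _; apply: ler_sum => j _.
  rewrite !normrM norm_conjC eS; apply: ler_wpM2l => //; exact: norm_prod_le.
have hsQ : `|s * Q| <= S.
  rewrite normrM; apply: le_trans (_ : `|s| * ((\sum_i \sum_j `|c i j|) * S) <= S).
    by apply: ler_wpM2l.
  by rewrite mulrA -{2}(mul1r S); apply: ler_wpM2r.
move=> hr.
have rsQ : s * Q \is Num.real.
  have -> : s * Q = (S + s * Q) - S by rewrite addrC addKr.
  by apply: rpredB; [rewrite CrealE hr | exact: ger0_real].
have h1 : - (s * Q) <= S.
  apply: le_trans hsQ; rewrite -normrN; apply: real_ler_norm; by rewrite rpredN.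
by move: h1; rewrite -subr_ge0 opprK.
Qed.

Lemma sandwich {C : numClosedFieldType} n (I : finType) (w : I -> 'cV[C]_n) c k l :
  (forall i j, i != j -> adjmx (w i) *m w j = 0) ->
  (adjmx (w k) *m dsum w c *m w l) 0 0 = c k l * (nn (w k) * nn (w l)).
Proof.
move=> orth.
have ipo i j : i != j -> ip (w i) (w j) = 0 by move=> h; rewrite /ip orth // mxE.
rewrite /dsum mulmx_sumr mulmx_suml summxE (bigD1 k) //= [X in _ + X]big1 ?addr0; last first.
  move=> i ik; rewrite mulmx_sumr mulmx_suml summxE big1 // => j _.
  by rewrite -scalemxAr -scalemxAl !mulmxA (orth k i) 1?(eq_sym k) // !mul0mx scaler0 mxE.
rewrite mulmx_sumr mulmx_suml summxE (bigD1 l) //= [X in _ + X]big1 ?addr0; last first.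
  move=> j jl; rewrite -scalemxAr -scalemxAl (mulmxA (adjmx (w k))) -(mulmxA _ (adjmx (w j))).
  by rewrite (orth j l jl) !mulmx0 scaler0 mxE.
rewrite -scalemxAr -scalemxAl mxE (mulmxA (adjmx (w k))) -(mulmxA _ (adjmx (w l))) mul11.
by rewrite -/(ip (w k) (w k)) -/(ip (w l) (w l)).
Qed.

Lemma extremal_herm {C : numClosedFieldType} d m (I : finType)
  (X : 'M[C]_(d * m)) (w : I -> 'cV[C]_(d * m)) (c : I -> I -> C) :
  extremal X -> X = \sum_i w i *m adjmx (w i) ->
  (forall i j, i != j -> adjmx (w i) *m w j = 0) -> (forall i, w i != 0) ->
  (forall i j, (c i j)^* = c j i) ->
  \sum_(p : I * I) c p.1 p.2 *: Fam w p = 0 -> forall i j, c i j = 0.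
Proof.
move=> [sX ext] eX orth nz hc hsum.
set K := \sum_i \sum_j `|c i j|.
have K0 : 0 <= K by apply: sumr_ge0 => i _; apply: sumr_ge0 => *; exact: normr_ge0.
set e := (K + 1)^-1.
have K1 : 0 < K + 1 by rewrite ltr_wpDl // ltr01.
have e0 : 0 < e by rewrite invr_gt0.
have he : e^* = e by rewrite geC0_conj // ltW.
have eK : `|e| * K <= 1.
  by rewrite ger0_norm ?ltW // mulrC /e ltr_pdivrMr // mul1r ltrDl ltr01.
set Y := dsum w c.
have pY : ptrace_h Y = 0 by rewrite /Y ptrace_dsum.
have sP : seeds (X + e *: Y).
  split; first by rewrite eX; apply: psd_perturb.
  by rewrite ptraceD ptraceZ pY scaler0 addr0 sX.2.
have sM : seeds (X + (- e) *: Y).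
  split; first (rewrite eX /Y; have HH := @psd_perturb C _ I w c (- e); apply: HH => //; [by apply/eqP; rewrite -CrealE rpredN gtr0_real | by rewrite normrN]).
  by rewrite ptraceD ptraceZ pY scaler0 addr0 sX.2.
have h2 : 0 < (2^-1 : C) < 1.
  apply/andP; split; [by rewrite invr_gt0 ltr0n | by rewrite invf_lt1 ?ltr0n // ltr1n].
have e2 : 1 - 2^-1 = 2^-1 :> C.
  by apply: (mulfI (_ : (2 : C) != 0)); rewrite ?pnatr_eq0 // mulrBr mulfV ?pnatr_eq0 // mulr1; rewrite (_ : 2 = 1 + 1 :> C) ?addrK // -natrD.
have eXc : X = 2^-1 *: (X + e *: Y) + (1 - 2^-1) *: (X + (- e) *: Y).
  rewrite e2 -scalerDr addrACA scaleNr subrr addr0 -mulr2n -scaler_nat.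
  by rewrite scalerA mulVf ?pnatr_eq0 // scale1r.
have [h _] := ext _ _ _ sP sM h2 eXc.
have Y0 : Y = 0.
  move/eqP: h; rewrite -subr_eq0 addrC addKr scaler_eq0 (gt_eqF e0) /=.
  by move/eqP.
move=> k l.
have := sandwich c k l orth; rewrite -/Y Y0 mulmx0 mul0mx mxE.
move/esym/eqP; rewrite !mulf_eq0 /nn (negbTE (ip_neq0 (nz k))) (negbTE (ip_neq0 (nz l))) !orbF.
by move/eqP.
Qed.

Lemma conjD' {C : numClosedFieldType} (x y : C) : (x + y)^* = x^* + y^*.
Proof. exact: rmorphD. Qed.
Lemma conjB' {C : numClosedFieldType} (x y : C) : (x - y)^* = x^* - y^*.
Proof. exact: rmorphB. Qed.
Lemma conjM' {C : numClosedFieldType} (x y : C) : (x * y)^* = x^* * y^*.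
Proof. exact: rmorphM. Qed.

Lemma sum_swap {V : nmodType} (I : finType) (G : I * I -> V) :
  \sum_(p : I * I) G (p.2, p.1) = \sum_(p : I * I) G p.
Proof.
rewrite -(pair_big predT predT (fun i j => G (j, i))) exchange_big /=.
rewrite (pair_big predT predT (fun j i => G (j, i))) /=.
by apply: eq_bigr => -[].
Qed.

Lemma extremal_indep {C : numClosedFieldType} d m (I : finType)
  (X : 'M[C]_(d * m)) (w : I -> 'cV[C]_(d * m)) :
  extremal X -> X = \sum_i w i *m adjmx (w i) ->
  (forall i j, i != j -> adjmx (w i) *m w j = 0) -> (forall i, w i != 0) ->
  lin_indep (Fam w).
Proof.
move=> ext eX orth nz c hc.
pose c0 i j := c (i, j).
have s0 : \sum_(p : I * I) c0 p.1 p.2 *: Fam w p = 0.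
  by rewrite -[RHS]hc; apply: eq_bigr => -[i j].
have s1 : \sum_(p : I * I) (c0 p.2 p.1)^* *: Fam w p = 0.
  have -> : \sum_(p : I * I) (c0 p.2 p.1)^* *: Fam w p =
            adjmx (\sum_(p : I * I) c (p.2, p.1) *: Fam w (p.2, p.1)).
    rewrite adjmx_sum; apply: eq_bigr => -[i j] _.
    by rewrite adjmxZ /Fam /= adjmxM adjmxK.
  by rewrite (sum_swap (fun p => c p *: Fam w p)) hc adjmx0.
pose c1 i j := c0 i j + (c0 j i)^*.
pose c2 i j := 'i * (c0 i j - (c0 j i)^*).
have h1 : forall i j, c1 i j = 0.
  apply: (extremal_herm ext eX orth nz).
    by move=> i j; rewrite /c1 conjD' conjCK addrC.
  by rewrite /c1; under eq_bigr do rewrite scalerDl; rewrite big_split /= s0 s1 addr0.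
have h2 : forall i j, c2 i j = 0.
  apply: (extremal_herm ext eX orth nz).
    by move=> i j; rewrite /c2 conjM' conjB' conjCK conjCi; ring.
  rewrite /c2; under eq_bigr do rewrite -scalerA scalerBl.
  by rewrite -scaler_sumr sumrB s0 s1 subrr scaler0.
move=> [i j]; have := h1 i j; have := h2 i j; rewrite /c1 /c2 -/(c0 i j).
move/eqP; rewrite mulf_eq0 (negbTE (neq0Ci C)) /= subr_eq0 => /eqP ->.
move/eqP; rewrite -mulr2n mulrn_eq0 /= => /eqP h.
by [].
Qed.
Lemma tadj {C : numClosedFieldType} p q (M : 'M[C]_(p, q)) :
  map_mx Num.conj (trmx M) = adjmx M.
Proof. by apply/matrixP => i j; rewrite !mxE. Qed.

Lemma diag_decomp {C : numClosedFieldType} n (P : 'M[C]_n) (sp : 'rV[C]_n) :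
  adjmx P *m diag_mx sp *m P = \sum_k sp 0 k *: (adjmx (row k P) *m adjmx (adjmx (row k P))).
Proof.
apply/matrixP => a b; rewrite mul_mx_diag summxE mxE; apply: eq_bigr => k _.
rewrite !mxE big_ord1 !mxE conjCK; ring.
Qed.

Lemma spectral_decomp {C : numClosedFieldType} n (X : 'M[C]_n) : psd X ->
  exists w : 'I_n -> 'cV[C]_n, X = \sum_k w k *m adjmx (w k) /\
     (forall i j, i != j -> adjmx (w i) *m w j = 0).
Proof.
move=> [hX hq].
have nX : X \is normalmx.
  by apply/normalmxP; rewrite tadj hX.
have eX := orthomx_spectralP nX.
set P := spectralmx X in eX; set sp := spectral_diag X in eX.
have uP : P \is unitarymx := spectral_unitarymx X.
have PP : P *m adjmx P = 1%:M by rewrite -tadj; exact/unitarymxP.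
rewrite invmx_unitary // tadj diag_decomp in eX.
pose u k := adjmx (row k P).
have uo k l : adjmx (u k) *m u l = ((k == l)%:R)%:M.
  rewrite /u adjmxK; apply/matrixP => i j; rewrite !ord1.
  have PPkl := PP; move/matrixP/(_ k l): PPkl; rewrite [in RHS]mxE => <-.
  by rewrite [RHS]mxE eqxx mulr1n !mxE; apply: eq_bigr => a _; rewrite !mxE.
have ipu k l : ip (u k) (u l) = (k == l)%:R by rewrite /ip uo mxE eqxx mulr1n.
have lam0 k : 0 <= sp 0 k.
  have := hq (u k); rewrite -/(qf X (u k)) eX qf_sum (bigD1 k) //= big1 ?addr0.
    by rewrite qfZ qf_outer ipu eqxx conjC1 !mulr1.
  by move=> l lk; rewrite qfZ qf_outer ipu (negbTE lk) conjC0 mul0r mulr0.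
exists (fun k => sqrtC (sp 0 k) *: u k); split.
  rewrite eX; apply: eq_bigr => k _.
  rewrite adjmxZ -scalemxAl -scalemxAr scalerA geC0_conj ?sqrtC_ge0 //.
  by rewrite -expr2 sqrtCK.
move=> i j ij; rewrite adjmxZ -scalemxAl -scalemxAr uo (negbTE ij).
by rewrite /= (_ : (0 : C)%:M = 0) ?scaler0 //; apply/matrixP => a b; rewrite !mxE mul0rn.
Qed.

Lemma indep_card {C : numClosedFieldType} (J : finType) p q (F : J -> 'M[C]_(p, q)) :
  lin_indep F -> (#|J| <= p * q)%N.
Proof.
move=> ind.
pose B := \matrix_(k < #|J|) mxvec (F (enum_val k)).
have rf : row_free B.
  apply: inj_row_free => v vB.
  have e : \sum_(j : J) v 0 (enum_rank j) *: F j = 0.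
    apply/eqP; rewrite -mxvec_eq0; apply/eqP.
    rewrite linear_sum /= -[RHS]vB mulmx_sum_row.
    rewrite (reindex (enum_val : 'I_#|J| -> J)) /=; last first.
      by exists enum_rank => x _; rewrite ?enum_valK ?enum_rankK.
    apply: eq_bigr => k _; rewrite enum_valK linearZ /= rowK //.
  apply/rowP => k; rewrite mxE -(enum_valK k); exact: ind e (enum_val k).
rewrite -(eqP rf); exact: rank_leq_col.
Qed.

Lemma rank_sum_outer {C : numClosedFieldType} n (I : finType) (w : I -> 'cV[C]_n) :
  (\rank (\sum_i w i *m adjmx (w i))%R <= #|I|)%N.
Proof.
rewrite -sum1_card (eq_bigl predT) //.
apply: (big_ind2 (fun (A : 'M[C]_n) k => \rank A <= k)%N).
- by rewrite mxrank0.
- move=> A x B y hA hB.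
  have h1 : (\rank (A + B)%R <= \rank (A + B)%MS)%N.
    exact: mxrankS (addmx_sub_adds (submx_refl A) (submx_refl B)).
  have h2 := (mxrank_adds_leqif A B).1.
  apply: (leq_trans h1); exact: (leq_trans h2 (leq_add hA hB)).
- move=> i _; apply: leq_trans (mxrankM_maxl _ _) _; exact: rank_leq_col.
Qed.



Lemma extremal_rank {C : numClosedFieldType} d m (X : 'M[C]_(d * m)) :
  extremal X -> (\rank X <= m)%N.
Proof.
move=> ext; have [[pX _] _] := ext.
have [w [eX orth]] := spectral_decomp pX.
pose A : {pred 'I_(d * m)} := [pred k | w k != 0].
pose w' (x : {x in A}) := w (val x).
have eX' : X = \sum_(x : {x in A}) w' x *m adjmx (w' x).
  rewrite -(big_sub A (fun i => w i *m adjmx (w i))) eX.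
  rewrite [LHS](bigID (mem A)) /= [X in _ + X]big1 ?addr0 //.
  by move=> i; rewrite inE negbK => /eqP ->; rewrite mul0mx.
have orth' i j : i != j -> adjmx (w' i) *m w' j = 0.
  by move=> ij; apply: orth; rewrite val_eqE.
have nz' x : w' x != 0 by have := valP x; rewrite inE.
have ind := extremal_indep ext eX' orth' nz'.
have c1 := indep_card ind; rewrite card_prod in c1.
have c2 := rank_sum_outer w'; rewrite -eX' in c2.
nia.
Qed.

Unset Implicit Arguments.
Theorem theorem3 (C : numClosedFieldType) (d m : nat) (hd : (0 < d)%N) (hm : (0 < m)%N) :
  (forall (X : 'M[C]_(d * m)) (r : nat) (w : 'I_r -> 'cV[C]_(d * m)),
      seeds X ->
      X = \sum_(i < r) w i *m adjmx (w i) ->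
      (forall i j, i != j -> adjmx (w i) *m w j = 0) ->
      (forall i, w i != 0) ->
      r = \rank X ->
      (extremal X <->
       lin_indep (fun ij : 'I_r * 'I_r => Wop (w ij.1) *m adjmx (Wop (w ij.2)))))
  /\
  (forall X : 'M[C]_(d * m), extremal X -> (\rank X <= m)%N).
Proof.
split; last by move=> X; exact: extremal_rank.
move=> X r w sX eX orth nz _; split.
  by move=> ext; exact: (extremal_indep ext eX orth nz).
by move=> ind; exact: (indep_extremal sX eX orth nz ind).
Qed.
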